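(* Let $\mathscr X$ be a compact subset of $\mathbb R^d$ and $\|\cdot\|$ a norm on $\mathbb R^d$. Let $a\in(0,1]$ and $\alpha_1,\alpha_2,\ldots\in[a,1]$. Let $\mathbf x_1\in\mathscr X$ be arbitrary and, for $n=1,2,\ldots$, let $\mathbf x_{n+1}$ be any point of $\mathscr X$ such that $\min_{1\le i\le n}\|\mathbf x_{n+1}-\mathbf x_i\|\ge\alpha_n\,\mathsf{CR}(\mathbf X_n)$, where $\mathbf X_n=\{\mathbf x_1,\ldots,\mathbf x_n\}$ (relaxed greedy packing). Then for all $n\ge2$, $$\mathsf{CR}(\mathbf X_n)\le\frac2a\,\mathsf{CR}_n^*,\qquad\mathsf{SR}(\mathbf X_n)\ge\frac a2\,\mathsf{SR}_n^*,\qquad\mathsf{MR}(\mathbf X_n)\le\frac2a.$$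
   Context: For a design $\mathbf X_n$ of $n$ points in $\mathscr X$: fill distance $\mathsf{CR}(\mathbf X_n)=\sup_{\mathbf x\in\mathscr X}\min_{\mathbf x_i\in\mathbf X_n}\|\mathbf x-\mathbf x_i\|$; separation radius $\mathsf{SR}(\mathbf X_n)=\tfrac12\min_{\mathbf x_i\ne\mathbf x_j\in\mathbf X_n}\|\mathbf x_i-\mathbf x_j\|$; mesh-ratio $\mathsf{MR}(\mathbf X_n)=\mathsf{CR}(\mathbf X_n)/\mathsf{SR}(\mathbf X_n)$. $\mathsf{CR}_n^*$ is the minimum of $\mathsf{CR}$ and $\mathsf{SR}_n^*$ the maximum of $\mathsf{SR}$ over all $n$-point designs of distinct points in $\mathscr X$. *)

(* Defs.v *)
From HB Require Import structures.
From mathcomp Require Import all_boot all_order all_algebra.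
From mathcomp Require Import all_classical all_reals all_analysis.
Set Implicit Arguments. Unset Strict Implicit. Unset Printing Implicit Defensive.
Import Order.TTheory GRing.Theory Num.Theory.
Import numFieldNormedType.Exports.
Local Open Scope classical_set_scope.
Local Open Scope ring_scope.

Section Defs.
Variables (R : realType) (d : nat).
Local Notation V := 'rV[R]_d.

Definition is_norm (N : V -> R) : Prop :=
  [/\ forall u v, N (u + v) <= N u + N v,
      forall (k : R) u, N (k *: u) = `|k| * N u
    & forall u, N u = 0 -> u = 0].

Definition mindist (N : V -> R) n (p : 'I_n -> V) (y : V) : R :=
  inf [set N (y - p i) | i in [set: 'I_n]].

Definition CR (N : V -> R) (X : set V) n (p : 'I_n -> V) : R :=
  sup [set mindist N p y | y in X].

Definition SR (N : V -> R) n (p : 'I_n -> V) : R :=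
  2^-1 * inf [set N (p ij.1 - p ij.2) | ij in [set ij : 'I_n * 'I_n | p ij.1 <> p ij.2]].

Definition MR (N : V -> R) (X : set V) n (p : 'I_n -> V) : R :=
  CR N X p / SR N p.

Definition design (X : set V) n (p : 'I_n -> V) : Prop :=
  injective p /\ forall i, X (p i).

Definition CRstar (N : V -> R) (X : set V) n : R :=
  inf [set CR N X p | p in [set p : 'I_n -> V | design X p]].
Definition SRstar (N : V -> R) (X : set V) n : R :=
  sup [set SR N p | p in [set p : 'I_n -> V | design X p]].

(* the first n points x_0, ..., x_{n-1} of a sequence (paper: x_1..x_n) *)
Definition firstpts (x : nat -> V) n : 'I_n -> V := fun i => x (nat_of_ord i).
End Defs.
Arguments firstpts [R d] x n _.

(* Main.v *)
Require Import Defs.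
From HB Require Import structures.
From mathcomp Require Import all_boot all_order all_algebra.
From mathcomp Require Import all_classical all_reals all_analysis.
From mathcomp Require Import lra zify ring.
Import Order.TTheory GRing.Theory Num.Theory.
Import numFieldNormedType.Exports.
Local Open Scope classical_set_scope.
Local Open Scope ring_scope.

Lemma N0 {R : realType} {d} {N : 'rV[R]_d -> R} : is_norm N -> N 0 = 0.
Proof. case=> _ hZ _; by rewrite -(scale0r 0) hZ normr0 mul0r. Qed.

Lemma NN {R : realType} {d} {N : 'rV[R]_d -> R} u : is_norm N -> N (- u) = N u.
Proof. case=> _ hZ _; by rewrite -scaleN1r hZ normrN1 mul1r. Qed.

Lemma Nge0 {R : realType} {d} {N : 'rV[R]_d -> R} u : is_norm N -> 0 <= N u.
Proof.
move=> hN; have := hN; case=> hT _ _.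
have := hT u (- u); rewrite subrr (N0 hN) (NN _ hN).
move=> h; rewrite -(@pmulr_rge0 _ 2) //; lra.
Qed.

Lemma Nsub {R : realType} {d} {N : 'rV[R]_d -> R} u v : is_norm N -> N (u - v) <= N u + N v.
Proof. move=> hN; have := hN; case=> hT _ _; by rewrite -(NN v hN) hT. Qed.

Lemma Nsum {R : realType} {d} {N : 'rV[R]_d -> R} (I : Type) (r : seq I) (P : pred I) F :
  is_norm N -> N (\sum_(i <- r | P i) F i) <= \sum_(i <- r | P i) N (F i).
Proof.
move=> hN; have := hN; case=> hT _ _.
apply: (big_ind2 (fun x y => N x <= y)); first by rewrite (N0 hN).
  by move=> x1 x2 y1 y2 h1 h2; apply: le_trans (hT _ _) _; apply: lerD.
by [].
Qed.

Lemma coord_le (R : realType) d (u : 'rV[R]_d) i j : `|u i j| <= `|u|.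
Proof.
rewrite -[`|u|]/(mx_norm u) mx_normrE.
exact: (le_bigmax _ (fun ij : 'I_1 * 'I_d => `|u ij.1 ij.2|) (i, j)).
Qed.

Lemma Nbound {R : realType} {d} {N : 'rV[R]_d -> R} : is_norm N ->
  exists C, forall u, N u <= C * `|u|.
Proof.
move=> hN; have := hN; case=> hT hZ _.
exists (\sum_(i < 1) \sum_(j < d) N (delta_mx i j)) => u.
rewrite {1}(matrix_sum_delta u) mulr_suml.
apply: le_trans (Nsum _ _ _ _ hN) _; apply: ler_sum => i _.
rewrite mulr_suml.
apply: le_trans (Nsum _ _ _ _ hN) _; apply: ler_sum => j _.
rewrite hZ mulrC; apply: ler_wpM2l; first exact: Nge0.
exact: coord_le.
Qed.

Lemma Xbound {R : realType} {d} {N : 'rV[R]_d -> R} (X : set 'rV[R]_d) : is_norm N -> compact X ->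
  exists M, forall y, X y -> N y <= M.
Proof.
move=> hN Xc; have [C hC] := Nbound hN.
have [M [_ HM]] := compact_bounded Xc.
have H1 := HM (`|M| + 1); have : `|M| + 1 > M by have := ler_norm M; lra.
move=> /H1 {}H1.
exists (`|C| * (`|M| + 1)) => y /H1 /= hy.
apply: le_trans (hC y) _; apply: le_trans (ler_wpM2r (normr_ge0 _) (ler_norm C)) _.
by apply: ler_wpM2l.
Qed.

Lemma inf_attain {R : realType} m (f : 'I_m -> R) (i0 : 'I_m) :
  exists k, inf [set f i | i in [set: 'I_m]] = f k /\ forall i, f k <= f i.
Proof.
have [k' _ hk] := @arg_minP _ R _ i0 xpredT f erefl.
have lb : lbound [set f i | i in [set: 'I_m]] (f k').
  by move=> _ [i _ <-]; exact: hk.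
exists k'; split; last by move=> i; exact: hk.
apply/le_anti/andP; split.
  apply: ge_inf; first by exists (f k').
  by exists k'.
by apply: lb_le_inf => //; exists (f k'), k'.
Qed.

Lemma sup_ge {R : realType} {T} (X : set T) (h : T -> R) B y :
  (forall z, X z -> h z <= B) -> X y -> h y <= sup [set h z | z in X].
Proof.
move=> hB Xy; apply: ub_le_sup; last by exists y.
by exists B => _ [z Xz <-]; exact: hB.
Qed.

Lemma sup_le {R : realType} {T} (X : set T) (h : T -> R) C y :
  X y -> (forall z, X z -> h z <= C) -> sup [set h z | z in X] <= C.
Proof.
move=> Xy hC; apply: ge_sup; first by exists (h y), y.
by move=> _ [z Xz <-]; exact: hC.
Qed.

Lemma md_ex {R : realType} {d} (N : 'rV[R]_d -> R) m (p : 'I_m -> 'rV[R]_d) y (i0 : 'I_m) :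
  exists k, mindist N p y = N (y - p k) /\ forall i, N (y - p k) <= N (y - p i).
Proof. have [k hk] := inf_attain _ (fun i => N (y - p i)) i0. by exists k. Qed.

Lemma md_le {R : realType} {d} (N : 'rV[R]_d -> R) m (p : 'I_m -> 'rV[R]_d) y i :
  mindist N p y <= N (y - p i).
Proof. by have [k [-> hk]] := md_ex N _ p y i. Qed.

Lemma CR_ge {R : realType} {d} {N : 'rV[R]_d -> R} (X : set 'rV[R]_d) M m
  (p : 'I_m -> 'rV[R]_d) (i0 : 'I_m) y :
  is_norm N -> (forall y, X y -> N y <= M) -> (forall i, X (p i)) -> X y ->
  mindist N p y <= CR N X p.
Proof.
move=> hN hM hp Xy; apply: (sup_ge X _ (M + M)) => // z Xz.
apply: le_trans (md_le _ _ _ _ i0) _; apply: le_trans (Nsub _ _ hN) _.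
by apply: lerD; apply: hM.
Qed.

(* Paper's x_{k} is x (k-1) here; X_n = firstpts x n = {x 0, ..., x (n-1)}. *)
Theorem theorem5 (R : realType) (d : nat) (X : set 'rV[R]_d)
    (N : 'rV[R]_d -> R) (a : R) (alpha : nat -> R) (x : nat -> 'rV[R]_d) :
  compact X ->
  is_norm N ->
  0 < a <= 1 ->
  (forall n, (0 < n)%N -> a <= alpha n <= 1) ->
  (forall k, X (x k)) ->
  (forall n, (0 < n)%N ->
     alpha n * CR N X (firstpts x n) <= mindist N (firstpts x n) (x n)) ->
  forall n, (2 <= n)%N ->
  (exists p : 'I_n -> 'rV[R]_d, design X p) ->
  [/\ CR N X (firstpts x n) <= 2 / a * CRstar N X n,
      SR N (firstpts x n) >= a / 2 * SRstar N X n
    & MR N X (firstpts x n) <= 2 / a].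
Proof.
move=> Xc hN /andP[a0 a1] halpha Xx hgreedy n n2 [Y0 dY0].
have [M hM] := Xbound _ hN Xc.
pose rho m := CR N X (firstpts x m).
have fpX m : forall i : 'I_m, X (firstpts x m i) by move=> i; exact: Xx.
have rho0 m : (0 < m)%N -> 0 <= rho m.
  move=> m0.
  apply: le_trans _ (CR_ge X M _ (firstpts x m) (Ordinal m0) (x 0) hN hM (fpX m) (Xx 0)).
  have [k [-> _]] := md_ex N _ (firstpts x m) (x 0) (Ordinal m0).
  exact: Nge0.
have rho_mono m : (0 < m)%N -> rho m.+1 <= rho m.
  move=> m0; apply: (sup_le X _ _ (x 0)) => // z Xz.
  apply: le_trans _ (CR_ge X M _ (firstpts x m) (Ordinal m0) z hN hM (fpX m) Xz).
  have [k [-> _]] := md_ex N _ (firstpts x m) z (Ordinal m0).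
  exact: (md_le N _ (firstpts x m.+1) z (widen_ord (leqnSn m) k)).
have rho_monoG j m : (0 < j)%N -> (j <= m)%N -> rho m <= rho j.
  move=> j0; elim: m => [|m IH] hjm; first by exfalso; lia.
  have [e|lt] := eqVneq j m.+1; first by rewrite e.
  have hjm' : (j <= m)%N by lia.
  apply: le_trans (rho_mono m _) (IH hjm'); lia.
have key i j n' : (i < j)%N -> (j <= n')%N -> a * rho n' <= N (x j - x i).
  move=> hij hjn; have j0 : (0 < j)%N by lia.
  have h1 := md_le N _ (firstpts x j) (x j) (Ordinal hij).
  have h2 := hgreedy j j0.
  have /andP[aj _] := halpha j j0.
  have h3 := rho_monoG j n' j0 hjn.
  have h4 := rho0 j j0.
  apply: le_trans _ h1; apply: le_trans _ h2.
  apply: le_trans _ (ler_wpM2r h4 aj).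
  by rewrite ler_pM2l.
have pw n' i j : (i <= n')%N -> (j <= n')%N -> i <> j -> a * rho n' <= N (x i - x j).
  move=> hi hj hij; have [lt|gt|eq] := ltngtP i j.
  - by rewrite -opprB NN //; exact: key.
  - exact: key.
  - by exfalso.
have n0 : (0 < n)%N by lia.
have part1 : forall Y : 'I_n -> 'rV[R]_d, design X Y -> a / 2 * rho n <= CR N X Y.
  move=> Y [Yinj YX].
  pose i0 := Ordinal n0.
  have /choice [g hg] : forall i : 'I_n.+1, exists k : 'I_n,
      mindist N Y (x i) = N (x i - Y k).
    by move=> i; have [k [hk _]] := md_ex N _ Y (x i) i0; exists k.
  have /injectivePn [i [j hij gij]] : ~~ injectiveb g.
    by apply/negP => /injectiveP /leq_card; rewrite !card_ord ltnn.
  have hCR z : X z -> mindist N Y z <= CR N X Y.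
    by move=> Xz; exact: (CR_ge X M _ Y i0 z hN hM YX Xz).
  have hij' : (i : nat) <> j by move=> /val_inj e; rewrite e eqxx in hij.
  have h1 := pw n i j (ltn_ord i) (ltn_ord j) hij'.
  have e : x i - x j = (x i - Y (g i)) - (x j - Y (g i)).
    by rewrite opprB addrA subrK.
  have h2 := Nsub (x i - Y (g i)) (x j - Y (g i)) hN.
  rewrite -e in h2.
  have h3 := hCR _ (Xx i); have h4 := hCR _ (Xx j).
  rewrite hg in h3; rewrite hg -gij in h4.
  have : a * rho n <= 2 * CR N X Y by lra.
  rewrite mulrAC; lra.
have CRs : a / 2 * rho n <= CRstar N X n.
  apply: lb_le_inf; first by exists (CR N X Y0), Y0.
  by move=> _ [Y dY <-]; exact: part1.
have ha : a != 0 by rewrite gt_eqF.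
have part1' : rho n <= 2 / a * CRstar N X n.
  have := ler_wpM2l (_ : 0 <= 2 / a) CRs.
  have -> : 2 / a * (a / 2 * rho n) = rho n by field.
  apply; apply: divr_ge0 => //; exact: ltW.
have [m nm] : exists m, n = m.+1 by exists n.-1; lia.
subst n.
have m0 : (0 < m)%N by lia.
have SRY : forall Y : 'I_m.+1 -> 'rV[R]_d, design X Y -> SR N Y <= rho m.
  move=> Y [Yinj YX].
  pose i0 := Ordinal m0.
  have /choice [g hg] : forall i : 'I_m.+1, exists k : 'I_m,
      mindist N (firstpts x m) (Y i) = N (Y i - firstpts x m k).
    by move=> i; have [k [hk _]] := md_ex N _ (firstpts x m) (Y i) i0; exists k.
  have /injectivePn [i [j hij gij]] : ~~ injectiveb g.
    by apply/negP => /injectiveP /leq_card; rewrite !card_ord ltnn.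
  have hCR z : X z -> mindist N (firstpts x m) z <= rho m.
    by move=> Xz; exact: (CR_ge X M _ (firstpts x m) i0 z hN hM (fpX m) Xz).
  have YiYj : Y i <> Y j by move/Yinj => e; rewrite e eqxx in hij.
  rewrite /SR; set S := [set _ | _ in _].
  have h0 : inf S <= N (Y i - Y j).
    apply: ge_inf; last by exists (i, j).
    by exists 0 => _ [ij _ <-]; exact: Nge0.
  set p := firstpts x m (g i).
  have e : Y i - Y j = (Y i - p) - (Y j - p).
    by rewrite opprB addrA subrK.
  have h2 := Nsub (Y i - p) (Y j - p) hN.
  rewrite -e in h2.
  have h3 := hCR _ (YX i); have h4 := hCR _ (YX j).
  rewrite hg in h3; rewrite hg -gij in h4.
  lra.
have SRs : SRstar N X m.+1 <= rho m.
  apply: ge_sup; first by exists (SR N Y0), Y0.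
  by move=> _ [Y dY <-]; exact: SRY.
have SRx : a / 2 * rho m <= SR N (firstpts x m.+1).
  rewrite /SR; set S := [set _ | _ in _].
  have lbS : a * rho m <= inf S.
    have [Sne | S0] := pselect (S !=set0).
      apply: lb_le_inf => // _ [[i j] /= hij <-].
      apply: (pw m i j (ltn_ord i) (ltn_ord j)).
      by move=> e; apply: hij; rewrite /firstpts e.
    have -> : S = set0.
      by apply/seteqP; split => // z Sz; apply: S0; exists z.
    rewrite inf0.
    have h1 : (1 < m.+1)%N by lia.
    have [e|ne] := pselect (x 0 = x 1).
      by have := pw m 0 1 (leq0n _) m0 ltac:(lia); rewrite e subrr (N0 hN).
    exfalso; apply: S0; exists (N (x 0 - x 1)).
    by exists (ord0, Ordinal h1).
  rewrite mulrAC; lra.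
have rhom0 := rho0 m m0.
have rhomono := rho_mono m m0.
split.
- exact: part1'.
- apply: le_trans SRx; apply: ler_wpM2l => //.
  by apply: divr_ge0 => //; exact: ltW.
- rewrite /MR; set s := SR N (firstpts x m.+1).
  have hs0 : 0 <= s.
    apply: le_trans SRx; apply: mulr_ge0 => //; apply: divr_ge0 => //; exact: ltW.
  have [->|sne] := eqVneq s 0.
    by rewrite invr0 mulr0; apply: divr_ge0 => //; exact: ltW.
  have sp : 0 < s by rewrite lt_neqAle eq_sym sne hs0.
  rewrite ler_pdivrMr //.
  have := ler_wpM2l (_ : 0 <= 2 / a) SRx.
  have -> : 2 / a * (a / 2 * rho m) = rho m by field.
  move=> /(_ ltac:(apply: divr_ge0 => //; exact: ltW)) h.
  apply: le_trans rhomono _; apply: le_trans h _.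
  by rewrite mulrC.
Qed.
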